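(* Let $v_1,\dots,v_N,\tilde v$ be independent uniform templates in $\mathbb{Z}_2^n$ and $\varepsilon\ge0$. Let $\overline{W_N}$ denote the event ''$v_2\notin B_\varepsilon(v_1),\ v_3\notin B_\varepsilon(v_1)\cup B_\varepsilon(v_2),\ \dots,\ v_N\notin\bigcup_{k=1}^{N-1}B_\varepsilon(v_k)$''. Then $$NV_\varepsilon-\mathcal{I}^\varepsilon_{\varepsilon+1}\frac{N(N-1)}{2}\le\mathbb{P}\left(\tilde v\in\bigcup_{k=1}^N B_\varepsilon(v_k)\,\middle|\,\overline{W_N}\right)\le NV_\varepsilon.$$
   Context: $d_{\mathcal H}$ is the Hamming distance on $\mathbb{Z}_2^n$, $B_\varepsilon(t)=\{y:d_{\mathcal H}(t,y)\le\varepsilon\}$, $V_\varepsilon=\frac1{2^n}\sum_{k=0}^\varepsilon\binom nk$, and $\mathcal{I}^\varepsilon_d=|B_\varepsilon(u)\cap B_\varepsilon(v)|/2^n$ for any $u,v$ with $d_{\mathcal H}(u,v)=d$, explicitly $\mathcal{I}^\varepsilon_d=\frac{1}{2^n}\sum_{k=\max(0,d-\varepsilon)}^{\min(\varepsilon,d)}\sum_{i=0}^{\min(\varepsilon-k,\varepsilon-d+k)}\binom dk\binom{n-d}{i}$. *)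

(* Defs.v *)
From mathcomp Require Import all_boot all_order all_algebra.
Set Implicit Arguments. Unset Strict Implicit. Unset Printing Implicit Defensive.
Import Order.TTheory GRing.Theory Num.Theory.

Definition word (n : nat) := {ffun 'I_n -> bool}.

Definition dH (n : nat) (u v : word n) : nat := #|[set i | u i != v i]|.

Definition ball (n eps : nat) (t : word n) : {set word n} :=
  [set y | dH t y <= eps].

Local Open Scope ring_scope.

Definition Vol (R : fieldType) (n eps : nat) : R :=
  (\sum_(k < eps.+1) ('C(n, k))%:R) / (2 ^ n)%:R.

(* I^eps_d, explicit formula; lower index max(0,d-eps) = d - eps (truncated),
   upper inner index min(eps-k, eps-d+k), with eps-d+k written eps+k-d
   (nonnegative since k >= d - eps) *)
Definition Inter (R : fieldType) (n eps d : nat) : R :=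
  (\sum_((d - eps)%N <= k < (minn eps d).+1)
     \sum_(0 <= i < (minn (eps - k) (eps + k - d)).+1)
        ('C(d, k) * 'C(n - d, i))%:R) / (2 ^ n)%:R.

(* sample space: (v_1,...,v_N) and tilde v, uniform on a finite type *)
Definition Omega (n N : nat) := ({ffun 'I_N -> word n} * word n)%type.

Definition Pr (R : fieldType) (T : finType) (E : {set T}) : R :=
  #|E|%:R / #|T|%:R.

Definition condPr (R : fieldType) (T : finType) (A B : {set T}) : R :=
  Pr R (A :&: B) / Pr R B.

Definition WN (n N eps : nat) : {set Omega n N} :=
  [set w : Omega n N | [forall j : 'I_N, forall k : 'I_N,
              (k < j)%N ==> (w.1 j \notin ball eps (w.1 k))]].

Definition Hit (n N eps : nat) : {set Omega n N} :=
  [set w : Omega n N | [exists k : 'I_N, w.2 \in ball eps (w.1 k)]].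

(* Main.v *)
Require Import Defs.
From mathcomp Require Import all_boot all_order all_algebra.
From mathcomp Require Import zify ring lra.
Import Order.TTheory GRing.Theory Num.Theory.
Set Implicit Arguments. Unset Strict Implicit. Unset Printing Implicit Defensive.


Lemma dH_sym n (a b : word n) : dH a b = dH b a.
Proof. by rewrite /dH; apply: eq_card => i; rewrite !inE eq_sym. Qed.

Definition flip n (j : 'I_n) (b : word n) : word n :=
  [ffun i => if i == j then ~~ b i else b i].

Lemma flipK n j : involutive (@flip n j).
Proof. by move=> b; apply/ffunP => i; rewrite !ffunE; case: eqP => // _; rewrite negbK. Qed.

Lemma dH_flip n (a b : word n) j :
  dH a (flip j b) + (a j != b j) = dH a b + (a j == b j).
Proof.
rewrite /dH (cardsD1 j [set i | a i != flip j b i]) (cardsD1 j [set i | a i != b i]).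
have -> : [set i | a i != flip j b i] :\ j = [set i | a i != b i] :\ j.
  by apply/setP => i; rewrite !inE ffunE; case: eqP.
rewrite !inE ffunE eqxx; case: (a j); case: (b j) => /=; lia.
Qed.

Lemma card_union_le T (F : nat -> {set T}) m :
  #|\bigcup_(k < m) F k| <= \sum_(k < m) #|F k|.
Proof.
elim: m => [|m IH]; first by rewrite big_ord0 cards0.
rewrite big_ord_recr /= [X in _ <= X]big_ord_recr /=.
have := cardsUI (\bigcup_(k < m) F k) (F m). set x := #|_ :|: _|. set y := #|_ :&: _|. set z := #|\bigcup_(k < m) F k|. set s := \sum_(i < m) _. have IH2 : z <= s := IH. clear IH. lia.
Qed.

Lemma bonf T (F : nat -> {set T}) m :
  \sum_(k < m) #|F k| <=
    #|\bigcup_(k < m) F k| + \sum_(j < m) \sum_(k < j) #|F k :&: F j|.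
Proof.
elim: m => [|m IH]; first by rewrite !big_ord0.
rewrite !big_ord_recr /=.
have := cardsUI (\bigcup_(k < m) F k) (F m).
have : #|(\bigcup_(k < m) F k) :&: F m| <= \sum_(k < m) #|F k :&: F m|.
  rewrite setIC big_distrr /=. 
  apply: leq_trans (card_union_le (fun k => F m :&: F k) m) _.
  by apply: leq_sum => i _; rewrite setIC.
set x := #|_ :|: _|. set y := #|_ :&: F m|. set z := #|\bigcup_(k < m) F k|.
set s1 := \sum_(i < m) #|F i|. set s2 := \sum_(i < m) \sum_(k < i) _.
set s3 := \sum_(k < m) _.
have IH2 : s1 <= z + s2 := IH. clear IH. lia.
Qed.

Definition toset n (u y : word n) : {set 'I_n} := [set i | u i != y i].
Definition ofset n (u : word n) (S : {set 'I_n}) : word n :=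
  [ffun i => if i \in S then ~~ u i else u i].

Lemma tosetK n (u : word n) : cancel (toset u) (ofset u).
Proof.
move=> y; apply/ffunP => i; rewrite ffunE inE.
by case: (u i); case: (y i).
Qed.

Lemma ofsetK n (u : word n) : cancel (ofset u) (toset u).
Proof.
move=> S; apply/setP => i; rewrite inE ffunE.
by case: (i \in S); case: (u i).
Qed.

Lemma card_words_sets n (u : word n) (P : {set 'I_n} -> bool) :
  #|[set y : word n | P (toset u y)]| = #|[set S | P S]|.
Proof.
rewrite -(card_imset _ (can_inj (ofsetK u))).
rewrite (can2_imset_pre _ (ofsetK u) (tosetK u)).
by apply: eq_card => y; rewrite !inE.
Qed.


Ltac fin3 x A B D := case: (x \in A); case: (x \in B); case: (x \in D) => //=;
  let H1 := fresh in let H2 := fresh in move=> H1 H2;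
  try (by move: (H1 isT)); try (by move: (H2 isT)).

Lemma count_pairs (T : finType) (D : {set T}) k i :
  #|[set S : {set T} | (#|S :&: D| == k) && (#|S :\: D| == i)]|
    = 'C(#|D|, k) * 'C(#|~: D|, i).
Proof.
rewrite -!cards_draws -cardsX.
set X := setX _ _.
have inj : {in X &, injective (fun p : {set T} * {set T} => p.1 :|: p.2)}.
  move=> [A1 B1] [A2 B2]; rewrite !inE /= => /andP[/andP[sA1 _] /andP[sB1 _]]
    /andP[/andP[sA2 _] /andP[sB2 _]] E.
  have key : forall A B : {set T}, A \subset D -> B \subset ~: D ->
      (A :|: B) :&: D = A /\ (A :|: B) :\: D = B.
    move=> A B sA sB; split; apply/setP => x; rewrite !inE;
    move: (subsetP sA x) (subsetP sB x); rewrite !inE;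
    fin3 x A B D.
  have [e1 e2] := key _ _ sA1 sB1; have [e3 e4] := key _ _ sA2 sB2.
  by congr pair; [rewrite -e1 -e3 E | rewrite -e2 -e4 E].
rewrite -(card_in_imset inj); apply: eq_card => S; rewrite inE.
apply/idP/imsetP.
  move=> /andP[cA cB]; exists (S :&: D, S :\: D).
    by rewrite !inE /=; rewrite cA cB (subsetIr S D) /= ?andbT; apply/subsetP => x; rewrite !inE => /andP[].
  by rewrite /= setID.
move=> [[A B]]; rewrite !inE /= => /andP[/andP[sA cA] /andP[sB cB]] ->.
have -> : (A :|: B) :&: D = A.
  apply/setP => x; rewrite !inE; move: (subsetP sA x) (subsetP sB x); rewrite !inE.
  fin3 x A B D.
have -> : (A :|: B) :\: D = B.
  apply/setP => x; rewrite !inE; move: (subsetP sA x) (subsetP sB x); rewrite !inE.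
  fin3 x A B D.
by rewrite cA cB.
Qed.

Lemma sum_ord_single K a (G : nat -> nat) :
  a < K -> (forall k, k != a -> G k = 0) -> \sum_(k < K) G k = G a.
Proof.
move=> ha G0; rewrite (bigD1 (Ordinal ha)) //= big1 ?addn0 // => k.
by rewrite -val_eqE /= => /G0.
Qed.

Lemma count_Q (T : finType) (D : {set T}) (Q : nat -> nat -> bool) :
  #|[set S : {set T} | Q #|S :&: D| #|S :\: D|]| =
  \sum_(k < #|D|.+1) \sum_(i < #|~: D|.+1)
     (if Q k i then 'C(#|D|, k) * 'C(#|~: D|, i) else 0).
Proof.
rewrite -sum1_card big_mkcond /=.
symmetry.
transitivity (\sum_(k < #|D|.+1) \sum_(i < #|~: D|.+1) \sum_(S : {set T})
   (if Q k i && (S \in [set S0 : {set T} | (#|S0 :&: D| == k) && (#|S0 :\: D| == i)])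
    then 1 else 0)).
  apply: eq_bigr => k _; apply: eq_bigr => i _.
  case: (Q k i); last by rewrite big1.
  by rewrite -count_pairs -sum1_card big_mkcond.
rewrite (eq_bigr (fun k : 'I_#|D|.+1 => \sum_(S : {set T}) \sum_(i < #|~: D|.+1)
   (if Q k i && (S \in [set S0 : {set T} | (#|S0 :&: D| == k) && (#|S0 :\: D| == i)])
    then 1 else 0))); last by move=> k _; rewrite exchange_big.
rewrite exchange_big /=; apply: eq_bigr => S _.
rewrite (@sum_ord_single _ #|S :&: D| (fun k => \sum_(i0 < #|~: D|.+1)
   (if Q k i0 && (S \in [set S0 : {set T} | (#|S0 :&: D| == k) && (#|S0 :\: D| == i0)])
    then 1 else 0))); last 2 first.
- by rewrite ltnS subset_leq_card // subsetIr.
- move=> k hk; apply: big1 => i _.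
  rewrite inE; have -> : (#|S :&: D| == k) = false by rewrite eq_sym (negbTE hk).
  by case: (Q k i).
rewrite (@sum_ord_single _ #|S :\: D| (fun i0 =>
   (if Q #|S :&: D| i0 && (S \in [set S0 : {set T} | (#|S0 :&: D| == #|S :&: D|) && (#|S0 :\: D| == i0)])
    then 1 else 0))); last 2 first.
- by rewrite ltnS subset_leq_card // setDE subsetIr.
- move=> i hi.
  rewrite inE; have -> : (#|S :\: D| == i) = false by rewrite eq_sym (negbTE hi).
  by rewrite eqxx andbF; case: (Q _ i).
by rewrite !inE !eqxx /= andbT.
Qed.




Lemma sum_trunc (a b : nat) (c : nat -> nat) :
  \sum_(i < a) (if i < b then c i else 0) = \sum_(i < minn a b) c i.
Proof.
elim: a => [|a IH]; first by rewrite big_ord0 min0n big_ord0.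
rewrite big_ord_recr /= IH.
case: (ltnP a b) => h.
  by rewrite (_ : minn a.+1 b = a.+1) ?big_ord_recr //; lia.
by rewrite (_ : minn a.+1 b = b) ?addn0 //; lia.
Qed.

Lemma sum_le_ord a b (c : nat -> nat) : a <= b -> \sum_(i < a) c i <= \sum_(i < b) c i.
Proof.
move=> h; rewrite -!(big_mkord xpredT) (big_cat_nat (leq0n a) h) /=.
exact: leq_addr.
Qed.

Lemma ball_card n eps (t : word n) :
  #|ball eps t| = \sum_(k < eps.+1) 'C(n, k).
Proof.
have -> : ball eps t = [set y | (fun S => #|S| <= eps) (toset t y)].
  by apply/setP => y; rewrite !inE.
rewrite (card_words_sets t (fun S : {set 'I_n} => #|S| <= eps)).
have -> : [set S : {set 'I_n} | #|S| <= eps] =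
   [set S : {set 'I_n} | (fun k i => k + i <= eps) #|S :&: setT| #|S :\: setT|].
  by apply/setP => S; rewrite !inE setIT setDT cards0 addn0.
rewrite (count_Q [set: 'I_n] (fun k i => k + i <= eps)) setCT cards0 cardsT card_ord.
under eq_bigr => k _ do rewrite big_ord1 /= bin0 muln1 addn0.
transitivity (\sum_(k < minn n.+1 eps.+1) 'C(n,k)).
  by rewrite -sum_trunc; apply: eq_bigr => k _; rewrite ltnS.
rewrite minnC -sum_trunc; apply: eq_bigr => k _.
by case: ltnP => //= h; rewrite bin_small.
Qed.

Lemma dH_ofset n (u v : word n) (S : {set 'I_n}) :
  dH v (ofset u S) + #|S :&: toset u v| = #|toset u v| + #|S :\: toset u v|.
Proof.
set D := toset u v.
have -> : dH v (ofset u S) = #|(D :\: S) :|: (S :\: D)|.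
  rewrite /dH; apply: eq_card => i; rewrite !inE ffunE.
  by case: (i \in S); case: (u i); case: (v i).
have := cardsUI (D :\: S) (S :\: D).
have -> : (D :\: S) :&: (S :\: D) = set0.
  by apply/setP => i; rewrite !inE; case: (i \in S); case: (u i != v i).
rewrite cards0 => H1; have := cardsID S D; rewrite setIC; lia.
Qed.

Definition Ip n eps : nat :=
  \sum_((eps.+1 - eps)%N <= k < (minn eps eps.+1).+1)
     \sum_(0 <= i < (minn (eps - k) (eps + k - eps.+1)).+1)
        ('C(eps.+1, k) * 'C(n - eps.+1, i)).

Lemma inter_exact n eps (u v : word n) :
  dH u v = eps.+1 -> #|ball eps u :&: ball eps v| <= Ip n eps.
Proof.
move=> huv.
set D := toset u v.
have hD : #|D| = eps.+1 by [].
pose Q := fun k i => (k + i <= eps) && (eps.+1 + i <= eps + k).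
have -> : ball eps u :&: ball eps v =
   [set y | (fun S => Q #|S :&: D| #|S :\: D|) (toset u y)].
  apply/setP => y; rewrite !inE /Q.
  have H1 := dH_ofset u v (toset u y); rewrite tosetK -/D in H1.
  have H2 := cardsID D (toset u y).
  have H3 : dH u y = #|toset u y| by [].
  rewrite hD in H1; rewrite H3 /=.
  move: H1 H2 H3; set a := #|_ :&: D|; set b := #|_ :\: D|; set c := #|toset u y|.
  move=> H1 H2 H3.
  by apply/andP/andP => [][h1 h2]; split; lia.
have E := card_words_sets u (fun S => Q #|S :&: D| #|S :\: D|).
apply: leq_trans (eq_leq E) _.
rewrite (count_Q D Q) hD.
have -> : #|~: D| = n - eps.+1 by have := cardsC D; rewrite card_ord hD; lia.
set m := n - eps.+1.
pose G k := \sum_(i < m.+1) (if Q k i then 'C(eps.+1, k) * 'C(m, i) else 0).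
have -> : \sum_(k < eps.+2) G k = \sum_(1 <= k < eps.+1) G k.
  rewrite -(big_mkord xpredT G) big_nat_recr //= big_ltn //=.
  have -> : G 0 = 0 by apply: big1 => i _; rewrite /Q; case: ifP => //; lia.
  have -> : G eps.+1 = 0 by apply: big1 => i _; rewrite /Q; case: ifP => //; lia.
  by rewrite add0n addn0.
rewrite /Ip subSnn (minn_idPl (leqnSn eps)); apply: leq_sum => k _.
rewrite big_mkord /G.
set M := minn (eps - k) (eps + k - eps.+1).
apply: (@leq_trans (\sum_(i < m.+1) (if i < M.+1 then 'C(eps.+1, k) * 'C(m, i) else 0))).
  apply: leq_sum => i _; rewrite /Q /M; case: ifP => // /andP[h1 h2].
  by rewrite (_ : i < _ = true) //; lia.
rewrite (sum_trunc m.+1 M.+1 (fun i => 'C(eps.+1, k) * 'C(m, i))).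
  exact: (sum_le_ord (fun i => 'C(eps.+1, k) * 'C(m, i)) (geq_minr _ _)).
Qed.

Lemma flip_j n j (b : word n) : flip j b j = ~~ b j.
Proof. by rewrite ffunE eqxx. Qed.

Lemma bad_case n eps j (v y : word n) :
  dH v y <= eps -> ~~ (dH (flip j v) y <= eps) -> y j = v j /\ dH v y = eps.
Proof.
move=> h1 h2; have := dH_flip y v j.
rewrite (dH_sym y (flip j v)) (dH_sym y v).
case: (y j); case: (v j) => /=; lia.
Qed.

Lemma inter_flip n eps (u v : word n) d :
  dH u v = d.+1 -> exists v' : word n, dH u v' = d /\
    #|ball eps u :&: ball eps v| <= #|ball eps u :&: ball eps v'|.
Proof.
move=> huv.
have [j hj] : exists j, u j != v j.
  have : 0 < #|[set i | u i != v i]| by rewrite -/(dH u v) huv.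
  by rewrite card_gt0 => /set0Pn [j]; rewrite inE => hj; exists j.
exists (flip j v); split.
  have := dH_flip u v j; rewrite hj huv; move: hj; case: (u j); case: (v j) => //=; lia.
set v' := flip j v.
pose phi y := if dH v' y <= eps then y else flip j y.
set A := ball eps u :&: ball eps v.
have inA : forall y, (y \in A) = (dH u y <= eps) && (dH v y <= eps).
  by move=> y; rewrite !inE.
have inj : {in A &, injective phi}.
  move=> y1 y2; rewrite !inA => /andP[a1 b1] /andP[a2 b2]; rewrite /phi.
  case: ifP => c1; case: ifP => c2.
  - by [].
  - move=> E; have [e2 f2] := bad_case b2 (negbT c2).
    have := dH_flip v y2 j; rewrite -E e2 eqxx /=; lia.
  - move=> E; have [e1 f1] := bad_case b1 (negbT c1).
    have := dH_flip v y1 j; rewrite E e1 eqxx /=; lia.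
  - exact: (can_inj (flipK j)).
rewrite -(card_in_imset inj); apply: subset_leq_card; apply/subsetP => z.
move=> /imsetP [y]; rewrite inA => /andP[a b] ->; rewrite /phi.
case: ifP => c; first by rewrite !inE a c.
have [e f] := bad_case b (negbT c).
rewrite !inE.
have := dH_flip u y j; have := dH_flip v' y j; rewrite /v' flip_j e.
have := dH_flip y v j; rewrite (dH_sym y (flip j v)) (dH_sym y v).
move: hj; rewrite -e; case: (u j); case: (y j) => /=; lia.
Qed.

Lemma inter_bound n eps (u v : word n) :
  eps < dH u v -> #|ball eps u :&: ball eps v| <= Ip n eps.
Proof.
move=> h; have [d hd] : exists d, dH u v = d + eps.+1 by exists (dH u v - eps.+1); lia.
elim: d v hd {h} => [|d IH] v hd; first exact: inter_exact.
have [v' [h1 h2]] := inter_flip eps hd.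
exact: leq_trans h2 (IH v' h1).
Qed.


Definition W1 n N eps : {set {ffun 'I_N -> word n}} :=
  [set v : {ffun 'I_N -> word n} | [forall j : 'I_N, forall k : 'I_N,
              (k < j) ==> (v j \notin ball eps (v k))]].

Definition U n N eps (v : {ffun 'I_N -> word n}) : {set word n} :=
  [set y | [exists k : 'I_N, y \in ball eps (v k)]].

Lemma card_word n : #|word n| = 2 ^ n.
Proof. by rewrite card_ffun card_bool card_ord. Qed.

Lemma card_WN n N eps : #|WN n N eps| = #|W1 n N eps| * 2 ^ n.
Proof.
have -> : WN n N eps = setX (W1 n N eps) [set: word n].
  by apply/setP => w; rewrite !inE andbT.
by rewrite cardsX cardsT card_word.
Qed.

Lemma card_HW n N eps :
  #|Hit n N eps :&: WN n N eps| = \sum_(v in W1 n N eps) #|U eps v|.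
Proof.
rewrite -sum1_card big_mkcond /=.
pose F (v : {ffun 'I_N -> word n}) (y : word n) :=
  if (v, y) \in Hit n N eps :&: WN n N eps then 1 else 0.
rewrite (eq_bigr (fun p => F p.1 p.2)); last by move=> [v y] _.
rewrite -(pair_bigA _ F) /=.
rewrite [RHS]big_mkcond /=; apply: eq_bigr => v _.
case: ifP => hv; rewrite inE in hv.
  rewrite -sum1_card [RHS]big_mkcond /=; apply: eq_bigr => y _.
  by rewrite /F !inE /= hv andbT.
apply: big1 => y _; by rewrite /F !inE /= hv andbF.
Qed.

Definition Fk n N eps (v : {ffun 'I_N -> word n}) (k : nat) : {set word n} :=
  if insub k is Some i then ball eps (v i) else set0.

Lemma FkE n N eps (v : {ffun 'I_N -> word n}) (i : 'I_N) : Fk eps v i = ball eps (v i).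
Proof. by rewrite /Fk valK. Qed.

Lemma U_bigcup n N eps (v : {ffun 'I_N -> word n}) : U eps v = \bigcup_(k < N) Fk eps v k.
Proof.
apply/setP => y; rewrite inE; apply/existsP/bigcupP.
  by move=> [k hk]; exists k => //; rewrite FkE.
by move=> [k _]; rewrite FkE => hk; exists k.
Qed.

Definition Vn n eps := \sum_(k < eps.+1) 'C(n, k).

Lemma sumF n N eps (v : {ffun 'I_N -> word n}) : \sum_(k < N) #|Fk eps v k| = N * Vn n eps.
Proof.
under eq_bigr => k _ do rewrite FkE ball_card.
by rewrite big_const_ord iter_addn_0 mulnC.
Qed.

Lemma U_upper n N eps (v : {ffun 'I_N -> word n}) : #|U eps v| <= N * Vn n eps.
Proof. by rewrite U_bigcup -(sumF eps v); apply: card_union_le. Qed.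

Lemma U_lower n N eps (v : {ffun 'I_N -> word n}) : v \in W1 n N eps ->
  N * Vn n eps <= #|U eps v| + \sum_(j < N) j * Ip n eps.
Proof.
move=> hv; rewrite -(sumF eps v) U_bigcup.
apply: leq_trans (bonf _ _) _; rewrite leq_add2l.
apply: leq_sum => j _.
have -> : j * Ip n eps = \sum_(k < j) Ip n eps by rewrite big_const_ord iter_addn_0 mulnC.
apply: leq_sum => k _.
have hk : k < N by apply: ltn_trans (ltn_ord k) (ltn_ord j).
have -> : Fk eps v k = ball eps (v (Ordinal hk)) by rewrite -FkE.
rewrite FkE; apply: inter_bound.
move: hv; rewrite inE => /forallP /(_ j) /forallP /(_ (Ordinal hk)).
by rewrite /= (ltn_ord k) /= inE -ltnNge.
Qed.

Lemma sum_tri N c : (\sum_(j < N) j * c) * 2 = N * N.-1 * c.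
Proof.
elim: N => [|N IH]; first by rewrite big_ord0.
rewrite big_ord_recr /= mulnDl IH; case: N {IH} => [|N] /=; lia.
Qed.

Unset Implicit Arguments. Set Strict Implicit.
Local Open Scope ring_scope.

Theorem lemma4p10 (R : realFieldType) (n N eps : nat) :
  0 < Pr R (WN n N eps) ->
  N%:R * Vol R n eps - Inter R n eps eps.+1 * (N%:R * (N%:R - 1) / 2)
    <= condPr R (Hit n N eps) (WN n N eps)
  /\ condPr R (Hit n N eps) (WN n N eps) <= N%:R * Vol R n eps.
Proof.
move=> hW.
set w := #|W1 n N eps|.
set a := #|Hit n N eps :&: WN n N eps|.
set T := (\sum_(j < N) j * Ip n eps)%N.
have A1 : (a <= w * (N * Vn n eps))%N.
  rewrite /a card_HW -sum_nat_const; apply: leq_sum => v _; exact: U_upper.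
have A2 : (w * (N * Vn n eps) <= a + w * T)%N.
  rewrite /a card_HW -!sum_nat_const -big_split /=; apply: leq_sum => v hv.
  exact: U_lower.
have A3 := sum_tri N (Ip n eps); rewrite -/T in A3.
have hWN := card_WN n N eps; rewrite -/w in hWN.
have hw : (0 < w)%N.
  move: hW; rewrite /Pr hWN; case: (w) => [|//]; rewrite mul0n mul0r ltxx //.
have hV : Vol R n eps = (Vn n eps)%:R / (2 ^ n)%:R by rewrite /Vol /Vn natr_sum.
have hI : Inter R n eps eps.+1 = (Ip n eps)%:R / (2 ^ n)%:R.
  rewrite /Inter /Ip natr_sum; congr (_ / _); apply: eq_bigr => k _; by rewrite natr_sum.
have hC : condPr R (Hit n N eps) (WN n N eps) = a%:R / (w%:R * (2 ^ n)%:R).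
  rewrite /condPr /Pr hWN natrM -/a card_prod card_word.
  have : ((#|{ffun 'I_N -> word n}|)%:R : R) != 0.
    by rewrite pnatr_eq0 -lt0n card_ffun card_word !expn_gt0.
  have : (w%:R : R) != 0 by rewrite pnatr_eq0 -lt0n.
  have : ((2 ^ n)%:R : R) != 0 by rewrite pnatr_eq0 expn_eq0.
  move=> h1 h2 h3; field; rewrite h1 h2 /=; exact: h3.
have hT : (T%:R : R) = (Ip n eps)%:R * (N%:R * (N%:R - 1) / 2).
  have : (T%:R * 2 : R) = (N * N.-1 * Ip n eps)%:R by rewrite -A3 natrM.
  case: (N) => [|M]; rewrite ?mul0n ?mul0r /=.
    by move=> E; rewrite mulr0; lra.
  rewrite !natrM; have -> : (M.+1%:R : R) = M%:R + 1 by rewrite natr1.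
  move=> E.
  have -> : (T%:R : R) = T%:R * 2 / 2 by field.
  by rewrite E; field.
rewrite hC hV hI.
have P0 : (0 : R) < (2 ^ n)%:R by rewrite ltr0n expn_gt0.
have W0 : (0 : R) < w%:R by rewrite ltr0n.
have WP : (0 : R) < w%:R * (2 ^ n)%:R by rewrite mulr_gt0.
have P1 : ((2 ^ n)%:R : R) != 0 by rewrite gt_eqF.
have A1R : (a%:R : R) <= w%:R * (N%:R * (Vn n eps)%:R) by rewrite -!natrM ler_nat.
have A2R : (w%:R * (N%:R * (Vn n eps)%:R) : R) <= a%:R + w%:R * T%:R.
  by rewrite -!natrM -natrD ler_nat.
split.
  rewrite ler_pdivlMr //.
  have -> : (N%:R * ((Vn n eps)%:R / (2 ^ n)%:R) -
     (Ip n eps)%:R / (2 ^ n)%:R * (N%:R * (N%:R - 1) / 2)) * (w%:R * (2 ^ n)%:R)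
     = w%:R * (N%:R * (Vn n eps)%:R) - w%:R * ((Ip n eps)%:R * (N%:R * (N%:R - 1) / 2)) :> R.
    by field.
  rewrite -hT; lra.
rewrite ler_pdivrMr //.
have -> : N%:R * ((Vn n eps)%:R / (2 ^ n)%:R) * (w%:R * (2 ^ n)%:R)
   = w%:R * (N%:R * (Vn n eps)%:R) :> R by field.
exact: A1R.
Qed.
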